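(* Fix a target miscoverage level $\bar\alpha\in(0,1)$, a threshold $\lambda_{\max}>0$, and a constant $c\in(0,1)$, and set $\gamma=c\lambda_{\max}$ (so $\gamma\in(0,\lambda_{\max})$). Consider any sequence of weights $(\lambda_t)_{t\ge1}$, actions $(\alpha_t)_{t\ge1}\subset[0,1]$, and error indicators $(\mathrm{err}_t)_{t\ge1}\subset\{0,1\}$ generated as follows, where everything other than the rules below (the data, the planned actions $\alpha^\star_{t|t}$ when $\lambda_t>0$, and the errors when $\alpha_t\in(0,1)$) may be arbitrary, even adversarial: (i) $\lambda_1\in[-\gamma\bar\alpha,\ \lambda_{\max}+\gamma(1-\bar\alpha)]$ (e.g. $\lambda_1\in[0,\lambda_{\max}]$); (ii) at each time $t$, a planned action $\alpha^\star_{t|t}\in[0,1]$ is produced by some procedure satisfying $\alpha^\star_{t|t}=1$ whenever $\lambda_t\le 0$; (iii) $\alpha_t=0$ if $\lambda_t\ge\lambda_{\max}$ and $\alpha_t=\alpha^\star_{t|t}$ otherwise; (iv) $\mathrm{err}_t=\mathbf 1(Y_t\notin C_t(1-\alpha_t))$, where the prediction sets satisfy $C_t(1-0)=\mathcal Y$ (so $\mathrm{err}_t=0$ when $\alpha_t=0$) and $\mathrm{err}_t=1$ when $\alpha_t=1$; (v) $\lambda_{t+1}=\lambda_t-\gamma(\bar\alpha-\mathrm{err}_t)$. Then for every $m\ge 0$ and every $K\ge1$, $$\left|\frac1K\sum_{t=m+1}^{m+K}\mathrm{err}_t-\bar\alpha\right|\le\frac{c+1}{cK}.$$ In particular $\lim_{K\to\infty}\frac1K\sum_{t=1}^K\mathrm{err}_t=\bar\alpha$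 for every realization, hence $\limsup_{K\to\infty}\frac1K\sum_{t=1}^K \mathbf 1(Y_t\notin C_t(1-\alpha_t))\le\bar\alpha$ almost surely, uniformly over all joint distributions of the time series.
   Context: This is the Bellman Conformal Inference (BCI) procedure for online calibration of prediction intervals. A time series $Y_1,Y_2,\dots$ takes values in a space $\mathcal Y$; at each time $t$ a forecaster provides nested prediction sets $C_t(1-\beta)\subset\mathcal Y$, $\beta\in[0,1]$, where $\beta$ is the nominal miscoverage rate and smaller $\beta$ gives a larger set, with the safeguard $C_t(1-0)=\mathcal Y$. The procedure chooses a nominal miscoverage rate $\alpha_t$ and outputs $C_t(1-\alpha_t)$; $\mathrm{err}_t$ indicates that $Y_t$ is not covered. The planned action $\alpha^\star_{t|t}$ is in the paper the first-period minimizer of a stochastic control problem whose objective is (expected sum of interval lengths) $+\lambda_t\cdot$(excess average miscoverage), but only property (ii) is used. *)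

(* Defs.v *)
From HB Require Import structures.
From mathcomp Require Import all_boot all_order all_algebra.
From mathcomp Require Import all_classical all_reals all_analysis.
Set Implicit Arguments. Unset Strict Implicit. Unset Printing Implicit Defensive.
Import Order.TTheory GRing.Theory Num.Theory.
Import numFieldNormedType.Exports.
Local Open Scope ring_scope.
Local Open Scope classical_set_scope.

Definition window_avg (R : realType) (err : nat -> R) (m K : nat) : R :=
  (\sum_(m.+1 <= t < (m + K).+1) err t) / K%:R.

(* Main.v *)
Require Import Defs.
From HB Require Import structures.
From mathcomp Require Import all_boot all_order all_algebra.
From mathcomp Require Import all_classical all_reals all_analysis.
From mathcomp Require Import ring lra.
Import Order.TTheory GRing.Theory Num.Theory.
Import numFieldNormedType.Exports.
Local Open Scope ring_scope.
Local Open Scope classical_set_scope.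

Lemma inv_bound (R : realType) (abar lmax c : R) (Y : Type) (y : nat -> Y)
  (C : nat -> R -> set Y) (lambda astar alpha err : nat -> R) :
  0 < abar < 1 -> 0 < lmax -> 0 < c < 1 ->
  (forall t, C t (1 - 0) = setT) ->
  - (c * lmax) * abar <= lambda 1%N <= lmax + (c * lmax) * (1 - abar) ->
  (forall t, (1 <= t)%N -> lambda t <= 0 -> astar t = 1) ->
  (forall t, (1 <= t)%N ->
      alpha t = if lmax <= lambda t then 0 else astar t) ->
  (forall t, (1 <= t)%N -> err t = 0 \/ err t = 1) ->
  (forall t, (1 <= t)%N -> (err t = 1 <-> ~ C t (1 - alpha t) (y t))) ->
  (forall t, (1 <= t)%N -> alpha t = 1 -> err t = 1) ->
  (forall t, (1 <= t)%N ->
      lambda t.+1 = lambda t - (c * lmax) * (abar - err t)) ->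
  forall n, - (c * lmax) * abar <= lambda n.+1 <= lmax + (c * lmax) * (1 - abar).
Proof.
move=> /andP[a0 a1] l0 /andP[c0 c1] Cs Hl1 Has Hal Herr Hiff Hone Hstep.
have g0 : 0 < c * lmax by rewrite mulr_gt0.
elim=> [|n /andP[lo hi]] //.
have t1 : (1 <= n.+1)%N by [].
rewrite Hstep //.
case: (lerP lmax (lambda n.+1)) => Hc.
  have e0 : err n.+1 = 0.
    case: (Herr _ t1) => // e1.
    exfalso; move: (e1); rewrite Hiff // Hal // Hc Cs; by apply.
  rewrite e0; apply/andP; split; nra.
case: (lerP (lambda n.+1) 0) => Hz.
  have e1 : err n.+1 = 1 by apply: Hone => //; rewrite Hal // ifN ?Has // -ltNge.
  rewrite e1; apply/andP; split; nra.
case: (Herr _ t1) => ->; apply/andP; split; nra.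
Qed.

Theorem theorem1 (R : realType) (abar lmax c : R)
  (Y : Type) (y : nat -> Y) (C : nat -> R -> set Y)
  (lambda astar alpha err : nat -> R) :
  0 < abar < 1 -> 0 < lmax -> 0 < c < 1 ->
  (* nested prediction sets C_t(1 - beta), with safeguard C_t(1 - 0) = Y *)
  (forall t b1 b2, 0 <= b1 -> b1 <= b2 -> b2 <= 1 ->
      C t (1 - b2) `<=` C t (1 - b1)) ->
  (forall t, C t (1 - 0) = setT) ->
  (* (i) *)
  - (c * lmax) * abar <= lambda 1%N <= lmax + (c * lmax) * (1 - abar) ->
  (* (ii) *)
  (forall t, (1 <= t)%N -> 0 <= astar t <= 1) ->
  (forall t, (1 <= t)%N -> lambda t <= 0 -> astar t = 1) ->
  (* (iii) *)
  (forall t, (1 <= t)%N ->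
      alpha t = if lmax <= lambda t then 0 else astar t) ->
  (* (iv) *)
  (forall t, (1 <= t)%N -> err t = 0 \/ err t = 1) ->
  (forall t, (1 <= t)%N -> (err t = 1 <-> ~ C t (1 - alpha t) (y t))) ->
  (forall t, (1 <= t)%N -> alpha t = 1 -> err t = 1) ->
  (* (v) *)
  (forall t, (1 <= t)%N ->
      lambda t.+1 = lambda t - (c * lmax) * (abar - err t)) ->
  (forall m K : nat, (1 <= K)%N ->
      `| window_avg err m K - abar | <= (c + 1) / (c * K%:R))
  /\ (window_avg err 0 @ \oo --> abar).
Proof.
move=> Ha Hl Hc Hnest Cs Hl1 Has0 Has Hal Herr Hiff Hone Hstep.
have Hinv := @inv_bound _ _ _ _ _ _ _ _ _ _ _ Ha Hl Hc Cs Hl1 Has Hal Herr Hiff Hone Hstep.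
move: Ha Hc => /andP[a0 a1] /andP[c0 c1].
have g0 : 0 < c * lmax by rewrite mulr_gt0.
have key : forall m K : nat, (1 <= K)%N ->
      `| window_avg err m K - abar | <= (c + 1) / (c * K%:R).
  move=> m K K1.
  have Kp : 0 < K%:R :> R by rewrite ltr0n.
  have Hsum : \sum_(m.+1 <= t < (m + K).+1) (err t - abar)
      = (lambda (m + K).+1 - lambda m.+1) / (c * lmax).
    rewrite (telescope_sumr_eq (fun t => lambda t / (c * lmax))) ?ltnS ?leq_addr //.
      by rewrite mulrBl.
    move=> k /andP[k1 _]; rewrite Hstep; last by apply: leq_trans k1.
    field; rewrite ?gt_eqF //.
  have -> : window_avg err m K - abar
      = (\sum_(m.+1 <= t < (m + K).+1) (err t - abar)) / K%:R.
    rewrite /window_avg sumrB sumr_const_nat.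
    have -> : ((m + K).+1 - m.+1)%N = K by rewrite subSS addnC addnK.
    by field; rewrite gt_eqF.
  rewrite Hsum.
  move: (Hinv (m + K)%N) (Hinv m) => /andP[lo1 hi1] /andP[lo2 hi2].
  set D := lambda (m + K).+1 - lambda m.+1.
  have HD : `|D| <= lmax + c * lmax.
    rewrite ler_norml; apply/andP; split; rewrite /D; nra.
  rewrite !normrM !normfV (gtr0_norm g0) (gtr0_norm Kp).
  have -> : (c + 1) / (c * K%:R) = (lmax + c * lmax) / (c * lmax) / K%:R.
    field; rewrite ?gt_eqF //.
  by rewrite ler_pM2r ?invr_gt0 // ler_pM2r ?invr_gt0.
split => //.
apply/cvgrPdist_le => e e0.
set N := Num.Def.archi_bound ((c + 1) / (c * e)).
have HN : (c + 1) / (c * e) < N%:R.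
  by apply: archi_boundP; rewrite divr_ge0 // ?ltW ?mulr_gt0 // addr_gt0.
exists N.+1 => // n /= Hn.
have n1 : (1 <= n)%N by apply: leq_trans Hn.
rewrite distrC; apply: le_trans (key 0%N n n1) _.
have np : 0 < n%:R :> R by rewrite ltr0n.
have HNn : N%:R <= n%:R :> R by rewrite ler_nat; apply: ltnW.
rewrite ler_pdivrMr ?mulr_gt0 //.
rewrite ltr_pdivrMr ?mulr_gt0 // in HN.
have ce : 0 < c * e by rewrite mulr_gt0.
have := ler_wpM2r (ltW ce) HNn.
have -> : e * (c * n%:R) = n%:R * (c * e) by ring.
move=> H; exact: le_trans (ltW HN) H.
Qed.
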